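(* Let $X_\Sigma$ be a projective toric variety. For each primitive collection $C$ of $\Sigma$ there is a one-parameter subgroup $\lambda(C)\in\Gamma(G)$ such that for every point $x\in V(x_\rho:\rho\in C)\subset\mathbf C^{\Sigma(1)}$ and every ample divisor $D$ on $X_\Sigma$, the limit $\lim_{t\to0}\lambda(C)(t)\cdot x$ exists and $\langle\chi_D,\lambda(C)\rangle<0$ (i.e. $\lambda(C)$ fails the Hilbert–Mumford criterion for $x$ with respect to $\chi_D$). Moreover, if $\Sigma$ is simplicial, $-\lambda(C)$ is a positive integer multiple of the primitive relation of $C$.
   Context: $\Sigma$ is a complete fan in $N_{\mathbf R}$ ($N$ a lattice) with rays $\Sigma(1)$, primitive ray generators $u_\rho$, torus-invariant divisors $D_\rho$. A primitive collection is a subset $C\subset\Sigma(1)$ not contained in $\sigma(1)$ for any cone $\sigma\in\Sigma$, every proper subset of which is contained in some $\sigma(1)$. $G=\mathrm{Hom}_{\mathbf Z}(\mathrm{Cl}(X_\Sigma),\mathbf C^\times)\subset(\mathbf C^\times)^{\Sigma(1)}$ acts coordinatewise on $\mathbf C^{\Sigma(1)}=\mathrm{Spec}\,\mathbf C[x_\rho:\rho\in\Sigma(1)]$; its one-parameter subgroups are $\Gamma(G)=\{b\in\mathbf Z^{\Sigma(1)}:\sum_\rho b_\rho u_\rho=0\}$ acting by $b(t)\cdot x=(t^{b_\rho}x_\rho)_\rho$, and for a divisor $D=\sum_\rho a_\rho D_\rho$ with associated character $\chi_D$ of $G$, $\langle\chi_D,b\rangle=\sum_\rho a_\rho b_\rho$.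 Primitive relation (for $\Sigma$ simplicial): $u=\sum_{\rho\in C}u_\rho$ lies in the relative interior of a unique cone $\sigma\in\Sigma$, and $u=\sum_{\rho\in\sigma(1)}q_\rho u_\rho$ with unique $q_\rho\in\mathbf Q_{\ge0}$; the primitive relation of $C$ is $r\in\mathbf Q^{\Sigma(1)}$ with $r_\rho=1$ for $\rho\in C\setminus\sigma(1)$, $r_\rho=1-q_\rho$ for $\rho\in C\cap\sigma(1)$, $r_\rho=-q_\rho$ for $\rho\in\sigma(1)\setminus C$, and $r_\rho=0$ otherwise. *)

(* Defs.v *)
(* Combinatorial model of a toric variety X_Sigma:
   N = Z^n, rays indexed by 'I_r with primitive generators u i : 'rV[int]_n,
   the fan Sigma given by the sets sigma(1) of its cones. *)
From mathcomp Require Import all_boot all_order all_algebra.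
From mathcomp Require Export complex.
From mathcomp Require Export reals.
Set Implicit Arguments.
Unset Strict Implicit.
Unset Printing Implicit Defensive.
Import Order.TTheory GRing.Theory Num.Theory.
Local Open Scope ring_scope.

Section Toric.
Variables (R : realType) (n r : nat) (u : 'I_r -> 'rV[int]_n).

Definition dotZ (m v : 'rV[int]_n) : int := \sum_(k < n) m 0 k * v 0 k.
Definition dotR (m v : 'rV[R]_n) : R := \sum_(k < n) m 0 k * v 0 k.

Definition uR (i : 'I_r) : 'rV[R]_n := map_mx (fun z : int => z%:~R) (u i).

Definition in_cone (S : {set 'I_r}) (v : 'rV[R]_n) : Prop :=
  exists c : 'I_r -> R, (forall i, 0 <= c i) /\ (forall i, i \notin S -> c i = 0)
    /\ v = \sum_(i < r) c i *: uR i.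

Definition is_face (S : {set 'I_r}) (F : 'rV[R]_n -> Prop) : Prop :=
  exists m : 'rV[R]_n, (forall v, in_cone S v -> 0 <= dotR m v) /\
    (forall v, F v <-> (in_cone S v /\ dotR m v = 0)).

(* v lies in the relative interior of Cone(S): in the cone, but in no proper face *)
Definition in_relint (S : {set 'I_r}) (v : 'rV[R]_n) : Prop :=
  in_cone S v /\
  (forall F, is_face S F -> F v -> forall w, in_cone S w -> F w).

Definition primitive_vec (w : 'rV[int]_n) : Prop :=
  \big[gcdn/0%N]_(k < n) absz (w ord0 k) = 1%N.

(* Sigma is a fan whose rays are exactly the rays with primitive generators u i,
   and for sigma in Sigma, S = sigma(1). *)
Definition is_fan (Sigma : {set {set 'I_r}}) : Prop :=
  (forall i, primitive_vec (u i)) /\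
  (forall i, [set i] \in Sigma) /\
  (forall S, S \in Sigma -> forall v, in_cone S v -> in_cone S (- v) -> v = 0) /\
  (forall S, S \in Sigma -> forall i, in_cone S (uR i) <-> i \in S) /\
  (forall S, S \in Sigma -> forall F, is_face S F ->
      exists2 T, T \in Sigma & forall v, F v <-> in_cone T v) /\
  (forall S T, S \in Sigma -> T \in Sigma ->
      is_face S (fun v => in_cone S v /\ in_cone T v) /\
      is_face T (fun v => in_cone S v /\ in_cone T v)).

Definition complete_fan (Sigma : {set {set 'I_r}}) : Prop :=
  forall v : 'rV[R]_n, exists2 S, S \in Sigma & in_cone S v.

Definition simplicial (Sigma : {set {set 'I_r}}) : Prop :=
  forall S, S \in Sigma -> forall c : 'I_r -> R,
    (forall i, i \notin S -> c i = 0) -> \sum_(i < r) c i *: uR i = 0 ->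
    forall i, c i = 0.

End Toric.

Arguments in_cone R {n r} u S v.
Arguments is_face R {n r} u S F.
Arguments in_relint R {n r} u S v.

Section Divisors.
Variables (n r : nat) (u : 'I_r -> 'rV[int]_n) (Sigma : {set {set 'I_r}}).

Definition maximal_cone (S : {set 'I_r}) : Prop :=
  S \in Sigma /\ forall T, T \in Sigma -> ~~ (S \proper T).

(* D = sum_rho a rho D_rho is Cartier with Cartier data m, and ample
   (for complete Sigma: <m_sigma,u_rho> > -a_rho for maximal sigma, rho notin sigma(1);
   CLS Thm 6.1.14). *)
Definition ample (a : 'I_r -> int) : Prop :=
  exists m : {set 'I_r} -> 'rV[int]_n,
    (forall S, S \in Sigma -> forall i, i \in S -> dotZ (m S) (u i) = - a i) /\
    (forall S, maximal_cone S -> forall i, i \notin S -> - a i < dotZ (m S) (u i)).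

Definition projective : Prop := exists a, ample a.

(* one-parameter subgroups of G *)
Definition in_Gamma (b : 'I_r -> int) : Prop := \sum_(i < r) b i *: u i = 0.

Definition pairing (a b : 'I_r -> int) : int := \sum_(i < r) a i * b i.

Definition primitive_collection (C : {set 'I_r}) : Prop :=
  (forall S, S \in Sigma -> ~~ (C \subset S)) /\
  (forall C' : {set 'I_r}, C' \proper C -> exists2 S, S \in Sigma & C' \subset S).

(* the primitive relation of C, with u_C in relint of the cone with sigma(1) = S,
   u_C = sum_{rho in S} q rho u_rho *)
Definition prim_rel (C S : {set 'I_r}) (q : 'I_r -> rat) (i : 'I_r) : rat :=
  if i \in C then (if i \in S then 1 - q i else 1)
  else (if i \in S then - q i else 0).

End Divisors.

Section Limits.
Variables (R : realType) (r : nat).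

Definition limit_exists (b : 'I_r -> int) (x : 'I_r -> R[i]) : Prop :=
  exists l : 'I_r -> R[i], forall e : R, 0 < e -> exists2 d : R, 0 < d &
    forall t : R[i], t != 0 -> `|t| < (d%:C)%C ->
      forall j, `|t ^ b j * x j - l j| < (e%:C)%C.

End Limits.

(* Main.v *)
Require Import Defs.
From mathcomp Require Import all_boot all_order all_algebra complex reals.
From mathcomp Require Import lra ring.
From Stdlib Require Import Classical.
Import Order.TTheory GRing.Theory Num.Theory.
Local Open Scope ring_scope.

Lemma limit_ok (R : realType) r (lam : 'I_r -> int) (C : {set 'I_r}) (x : 'I_r -> R[i]) :
  (forall j, j \notin C -> 0 <= lam j) -> (forall j, j \in C -> x j = 0) ->
  limit_exists lam x.
Proof.
move=> lam0 x0.
exists (fun j => if lam j == 0 then x j else 0) => e e0.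
pose nm (z : R[i]) := Num.sqrt ((complex.Re z)^+2 + (complex.Im z)^+2).
pose B : R := \sum_j nm (x j).
have B0 : 0 <= B by apply: sumr_ge0 => j _; rewrite sqrtr_ge0.
have xB j : `|x j| <= (B%:C)%C.
  rewrite normc_def lecR /B (bigD1 j) //= lerDl; apply: sumr_ge0 => k _; exact: sqrtr_ge0.
exists (e / (e + 1 + B)).
  by rewrite divr_gt0 // ltr_wpDr // ltr_wpDl // ltW.
move=> t t0 td j.
case: (boolP (j \in C)) => jC.
  by rewrite x0 // mulr0 if_same subr0 normr0 ltcR.
have := lam0 _ jC; case: (lam j) => // m _.
case: m => [|m] /=.
  by rewrite expr0z mul1r subrr normr0 ltcR.
rewrite subr0 normrM normrX.
have ed : e / (e + 1 + B) < 1.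
  by rewrite ltr_pdivrMr ?mul1r; lra.
have tt : `|t| ^+ m.+1 <= `|t|.
  rewrite exprSr ler_piMl //; apply: exprn_ile1 => //.
  by apply: ltW; apply: (lt_trans td); rewrite ltcR.
apply: (le_lt_trans (ler_wpM2r (normr_ge0 _) tt)).
apply: (le_lt_trans (ler_wpM2r (normr_ge0 _) (ltW td))).
apply: (le_lt_trans (ler_wpM2l _ (xB j))).
  by rewrite ler0c divr_ge0 // ?ltW //; lra.
rewrite -rmorphM ltcR /= mulrAC ltr_pdivrMr; last lra.
have : 0 <= e * B by rewrite mulr_ge0 // ltW.
nra.
Qed.
Lemma max_cone r (Sigma : {set {set 'I_r}}) S : S \in Sigma ->
  exists T, maximal_cone Sigma T /\ S \subset T.
Proof.
move=> SS.
have P0 : (S \in Sigma) && (S \subset S) by rewrite SS subxx.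
case: (@arg_maxnP _ S (fun T : {set 'I_r} => (T \in Sigma) && (S \subset T)) (fun T => #|T|) P0) => T /andP[TS ST] Tmax.
exists T; split=> //; split=> // T' T'S; apply/negP => /properP[sub [x xT' xT]].
have := Tmax T'; rewrite T'S (subset_trans ST sub) => /(_ isT).
have pr : T \proper T' by apply/properP; split=> //; exists x.
by move=> /= le; move: (proper_card pr); rewrite ltnNge le.
Qed.

Lemma dotZ_sum n r (m : 'rV[int]_n) (c : 'I_r -> int) (v : 'I_r -> 'rV[int]_n) :
  dotZ m (\sum_j c j *: v j) = \sum_j c j * dotZ m (v j).
Proof.
rewrite /dotZ.
under eq_bigr do rewrite summxE mulr_sumr.
rewrite exchange_big /=; apply: eq_bigr => j _.
rewrite mulr_sumr; apply: eq_bigr => k _.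
by rewrite mxE mulrCA.
Qed.

Lemma good_lam (R : realType) n r (u : 'I_r -> 'rV[int]_n) Sigma C S (k : nat)
  (c : 'I_r -> int) :
  primitive_collection Sigma C -> S \in Sigma -> (0 < k)%N ->
  (forall j, 0 <= c j) -> (forall j, j \notin S -> c j = 0) ->
  (\sum_(j in C) u j) *+ k = \sum_j c j *: u j ->
  let lam := fun j => c j - (if j \in C then k%:Z else 0) in
  in_Gamma u lam /\ forall (x : 'I_r -> R[i]) a, (forall j, j \in C -> x j = 0) ->
    ample u Sigma a -> limit_exists lam x /\ pairing a lam < 0.
Proof.
move=> [PC1 _] SS k0 c0 cS rel lam.
have G : in_Gamma u lam.
  rewrite /in_Gamma /lam.
  under eq_bigr do rewrite scalerBl.
  rewrite sumrB -rel; apply/eqP; rewrite subr_eq0 -sumrMnl; apply/eqP; rewrite big_mkcond /=.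
  by apply: eq_bigr => j _; case: (j \in C); rewrite ?scale0r // -natz scaler_nat.
split=> // x a x0 [m [m1 m2]]; split.
  apply: (@limit_ok R r lam C) => // j jC.
  by rewrite /lam (negbTE jC) subr0.
have [T [[TS Tmax] ST]] := @max_cone r Sigma S SS.
have := PC1 _ TS; case/subsetPn => j0 j0C j0T.
have D : \sum_j lam j * dotZ (m T) (u j) = 0.
  by rewrite -dotZ_sum G /dotZ big1 // => k' _; rewrite mxE mulr0.
have -> : pairing a lam = \sum_j (a j + dotZ (m T) (u j)) * lam j.
  transitivity (\sum_j a j * lam j + \sum_j lam j * dotZ (m T) (u j)); first by rewrite D addr0.
  rewrite -big_split; apply: eq_bigr => j _ /=.
  by rewrite /lam; ring.
have fle j : (a j + dotZ (m T) (u j)) * lam j <= 0.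
  case: (boolP (j \in T)) => jT.
    by rewrite m1 // subrr mul0r.
  have h1 := m2 _ (conj TS Tmax) _ jT.
  rewrite /lam cS; last by apply: contra jT; apply: (subsetP ST).
  rewrite sub0r; apply: mulr_ge0_le0; first by rewrite addrC -(opprK (a j)) subr_ge0 ltW.
  by case: (j \in C); rewrite ?oppr0 // oppr_le0.
rewrite (bigD1 j0) //=.
have h1 : (a j0 + dotZ (m T) (u j0)) * lam j0 < 0.
  have h1 := m2 _ (conj TS Tmax) _ j0T.
  rewrite /lam cS; last by apply: contra j0T; apply: (subsetP ST).
  rewrite j0C sub0r pmulr_rlt0 ?oppr_lt0 ?ltz_nat //.
  by rewrite addrC -(opprK (a j0)) subr_gt0.
have : \sum_(i | i != j0) (a i + dotZ (m T) (u i)) * lam i <= 0.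
  by apply: sumr_le0 => i _; apply: fle.
by move=> h2; rewrite -[0]addr0 ltr_leD.
Qed.
Lemma common_den (s : seq rat) : exists k : nat, (0 < k)%N /\
  forall x, x \in s -> exists z : int, z%:~R = k%:R * x.
Proof.
elim: s => [|y s [k [k0 H]]]; first by exists 1%N.
have d0 : (0 <= denq y) by apply: ltW; exact: denq_gt0.
exists (k * `|denq y|)%N; split; first by rewrite muln_gt0 k0 absz_gt0 denq_neq0.
move=> x; rewrite inE => /orP[/eqP -> | xs].
  exists (k%:Z * numq y).
  by rewrite intrM numqE natrM natr_absz ger0_norm //; ring.
have [z zE] := H x xs.
exists (z * denq y); rewrite intrM zE natrM natr_absz ger0_norm //; ring.
Qed.
Lemma int_rel (R : realType) n r (u : 'I_r -> 'rV[int]_n) (C : {set 'I_r})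
  (q : 'I_r -> rat) (k : nat) (c : 'I_r -> int) :
  (forall j, (c j)%:~R = k%:R * q j) ->
  \sum_(j in C) uR R u j = \sum_j (ratr (q j) : R) *: uR R u j ->
  (\sum_(j in C) u j) *+ k = \sum_j c j *: u j.
Proof.
move=> cE rel; apply/rowP => i.
move/rowP/(_ i): rel; rewrite !summxE => rel.
apply: (@intr_inj R).
rewrite mulmxnE summxE rmorphMn rmorph_sum /=.
have -> : \sum_(j in C) ((u j 0 i)%:~R : R) = \sum_(j in C) uR R u j 0 i.
  by apply: eq_bigr => j _; rewrite mxE.
rewrite rel rmorph_sum /= -sumrMnl; apply: eq_bigr => j _.
rewrite !mxE /=.
rewrite intrM -[((c j)%:~R : R)]ratr_int cE rmorphM /= ratr_nat -mulr_natr; ring.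
Qed.
Lemma pos_lb (R : realType) r (P : {set 'I_r}) (c : 'I_r -> R) :
  (forall j, j \in P -> 0 < c j) -> exists2 mn : R, 0 < mn & forall j, j \in P -> mn <= c j.
Proof.
move=> cP; pose s := \sum_(j in P) (c j)^-1.
have s0 : 0 <= s by apply: sumr_ge0 => j /cP cj; rewrite invr_ge0 ltW.
exists (1 + s)^-1; first by rewrite invr_gt0; lra.
move=> j jP; have cj := cP _ jP.
rewrite -[c j]invrK lef_pV2 ?posrE ?invr_gt0 //; last lra.
rewrite /s (bigD1 j) //=.
have : 0 <= \sum_(i in P | i != j) (c i)^-1.
  by apply: sumr_ge0 => l /andP[/cP cl _]; rewrite invr_ge0 ltW.
lra.
Qed.

Lemma rat_approx (R : realType) (x d : R) : 0 < d -> exists q : rat, `|ratr q - x| < d.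
Proof.
move=> d0; have [q] := @rat_in_itvoo R (x - d) (x + d) ltac:(lra).
rewrite in_itv /= => /andP[h1 h2]; exists q.
rewrite ltr_norml; apply/andP; split; lra.
Qed.
Lemma rat_cone (R : realType) n r (u : 'I_r -> 'rV[int]_n) (S : {set 'I_r})
  (w : 'rV[rat]_n) :
  in_cone R u S (map_mx (@ratr R) w) ->
  exists q : 'I_r -> rat, (forall j, 0 <= q j) /\ (forall j, j \notin S -> q j = 0) /\
    map_mx (@ratr R) w = \sum_j (ratr (q j) : R) *: uR R u j.
Proof.
move=> [c [c0 [cS wE]]].
pose P := [set j | 0 < c j].
have cP j : j \notin P -> c j = 0.
  by rewrite inE => h; apply/eqP; rewrite eq_le c0 andbT leNgt.
have PS j : j \in P -> j \in S.
  by move=> jP; apply: contraTT jP => /cS cj; rewrite inE cj ltxx.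
pose M : 'M[rat]_(r, n) := \matrix_(j, k) (if j \in P then (u j 0 k)%:~R else 0).
pose cv : 'rV[R]_r := \row_j c j.
have MR : map_mx (@ratr R) M = \matrix_(j, k) (if j \in P then (u j 0 k)%:~R else 0).
  by apply/matrixP => j k; rewrite !mxE; case: (j \in P); rewrite ?rmorph0 ?ratr_int.
have cvM : cv *m map_mx (@ratr R) M = map_mx (@ratr R) w.
  rewrite wE MR; apply/rowP => k; rewrite !mxE summxE; apply: eq_bigr => j _.
  rewrite !mxE; case: (boolP (j \in P)) => jP //.
  by rewrite cP // !mul0r.
have wM : (w <= M)%MS.
  by rewrite -(map_submx (@ratr R)) -cvM; exact: submxMl.
pose z0 := w *m pinvmx M.
have c0M : z0 *m M = w := mulmxKpV wM.
pose d := cv - map_mx (@ratr R) z0.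
have dK : (d <= kermx (map_mx (@ratr R) M))%MS.
  by apply/sub_kermxP; rewrite mulmxBl cvM -map_mxM c0M subrr.
rewrite -map_kermx in dK; case/submxP: dK => D dE.
have KM : kermx M *m M = 0 := mulmx_ker M.
set K := kermx M in dE KM.
clearbody K z0.
pose Kb : R := \sum_l \sum_j `|ratr (K l j) : R|.
have Kb0 : 0 <= Kb by apply: sumr_ge0 => l _; apply: sumr_ge0 => j _.
have [|mn mn0 mnP] := @pos_lb R r P c; first by move=> j; rewrite inE.
pose dl := mn / (Kb + 1).
have dl0 : 0 < dl by rewrite divr_gt0 //; lra.
have H l : exists e : rat, `|ratr e - D 0 l| < dl by apply: rat_approx.
pose E : 'rV[rat]_r := \row_l xchoose (H l).
have EP l : `|ratr (E 0 l) - D 0 l| < dl by rewrite mxE; exact: (xchooseP (H l)).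
pose c' := z0 + E *m K.
have c'M : c' *m M = w by rewrite mulmxDl c0M -mulmxA KM mulmx0 addr0.
have c'E j : ratr (c' 0 j) = c j + \sum_l (ratr (E 0 l) - D 0 l) * ratr (K l j) :> R.
  have dE' : c j - ratr (z0 0 j) = \sum_l D 0 l * ratr (K l j).
    transitivity (d 0 j); first by rewrite /d !mxE.
    by rewrite dE mxE; apply: eq_bigr => l _; rewrite mxE.
  rewrite /c' !mxE rmorphD rmorph_sum /=.
  have -> : c j = ratr (z0 0 j) + \sum_l D 0 l * ratr (K l j).
    by rewrite -dE'; ring.
  rewrite -addrA; congr (_ + _); rewrite -big_split /=; apply: eq_bigr => l _.
  rewrite rmorphM /=; ring.
have c'pos j : j \in P -> 0 < c' 0 j.
  move=> jP; rewrite -(ltr0q R) c'E.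
  set s := \sum_l _.
  have err : `|s| <= dl * Kb.
    apply: (le_trans (ler_norm_sum _ _ _)).
    have : \sum_l `|(ratr (E 0 l) - D 0 l) * (ratr (K l j) : R)| <= \sum_l dl * `|ratr (K l j) : R|.
      apply: ler_sum => l _; rewrite normrM; apply: ler_wpM2r => //; exact: ltW (EP l).
    move/le_trans; apply; rewrite -mulr_sumr; apply: ler_wpM2l; first exact: ltW.
    rewrite /Kb exchange_big /= [leRHS](bigD1 j) //= lerDl.
    by apply: sumr_ge0 => *; apply: sumr_ge0 => *; exact: normr_ge0.
  have dlK : dl * Kb < mn.
    rewrite /dl mulrAC ltr_pdivrMr; last lra.
    by rewrite mulrDr mulr1 ltrDl.
  have := mnP j jP; have := ler_norm (- s); rewrite normrN.
  lra.
exists (fun j => if j \in P then c' 0 j else 0); split; last split.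
- by move=> j; case: ifP => jP //; apply: ltW; apply: c'pos.
- move=> j jS; case: ifP => // jP; move: jS; by rewrite (PS _ jP).
- rewrite -c'M; apply/rowP => k; rewrite !mxE summxE rmorph_sum; apply: eq_bigr => j _.
  rewrite !mxE rmorphM /=; case: ifP => jP; first by rewrite ratr_int.
  by rewrite rmorph0 !mulr0 mul0r.
Qed.
Lemma finish (R : realType) n r (u : 'I_r -> 'rV[int]_n) Sigma C S (q : 'I_r -> rat) :
  primitive_collection Sigma C -> S \in Sigma -> (forall j, 0 <= q j) ->
  (forall j, j \notin S -> q j = 0) ->
  \sum_(j in C) uR R u j = \sum_j (ratr (q j) : R) *: uR R u j ->
  exists k : nat, (0 < k)%N /\ exists lam : 'I_r -> int,
    (forall j, (lam j)%:~R = k%:R * q j - (if j \in C then k%:R else 0) :> rat) /\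
    in_Gamma u lam /\ forall (x : 'I_r -> R[i]) a, (forall j, j \in C -> x j = 0) ->
      ample u Sigma a -> limit_exists lam x /\ pairing a lam < 0.
Proof.
move=> PC SS q0 qS rel.
have [k [k0 H]] := common_den [seq q j | j <- enum 'I_r].
pose c j := numq (k%:R * q j).
have cE j : (c j)%:~R = k%:R * q j.
  have [z zE] := H (q j) (map_f _ (mem_enum _ j)).
  by rewrite /c -zE numq_int.
have c0 j : 0 <= c j by rewrite /c numq_ge0 mulr_ge0.
have cS j : j \notin S -> c j = 0 by move=> jS; rewrite /c qS // mulr0.
have := @good_lam R n r u Sigma C S k c PC SS k0 c0 cS (@int_rel R n r u C q k c cE rel).
move=> [G L]; exists k; split=> //; exists (fun j => c j - (if j \in C then k%:Z else 0)).
split=> // j; rewrite intrB cE; case: (j \in C) => //.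
Qed.

Lemma subcone (R : realType) n r (u : 'I_r -> 'rV[int]_n) Sigma S' S0 (v : 'rV[R]_n) :
  is_fan R u Sigma -> S' \in Sigma -> S0 \in Sigma -> in_relint R u S' v ->
  in_cone R u S0 v -> S' \subset S0.
Proof.
move=> [_ [_ [_ [rays [_ inter]]]]] S'S S0S [inS' H] inS0.
have [F _] := inter S' S0 S'S S0S.
apply/subsetP => i iS'.
have := H _ F (conj inS' inS0) (uR R u i) ((rays S' S'S i).2 iS').
by move=> [_ /((rays S0 S0S i).1)].
Qed.

Theorem theoremB (R : realType) (n r : nat) (u : 'I_r -> 'rV[int]_n)
    (Sigma : {set {set 'I_r}}) :
  is_fan R u Sigma -> complete_fan R u Sigma -> projective u Sigma ->
  forall C : {set 'I_r}, primitive_collection Sigma C ->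
  exists lam : 'I_r -> int, in_Gamma u lam /\
    (forall (x : 'I_r -> R[i]) (a : 'I_r -> int),
        (forall j, j \in C -> x j = 0) -> ample u Sigma a ->
        limit_exists lam x /\ pairing a lam < 0) /\
    (simplicial R u Sigma ->
       forall (S : {set 'I_r}) (q : 'I_r -> rat),
         S \in Sigma ->
         in_relint R u S (\sum_(j in C) uR R u j) ->
         (forall j, 0 <= q j) -> (forall j, j \notin S -> q j = 0) ->
         \sum_(j in C) uR R u j = \sum_(j < r) (ratr (q j) : R) *: uR R u j ->
         exists2 k : nat, (0 < k)%N &
           forall j, - ((lam j)%:~R : rat) = k%:R * prim_rel C S q j).
Proof.
move=> fan cfan _ C PC.
have [[simp [S0 [q0 [S0S [rel0 [q00 [q0S qE]]]]]]] | NP] := classic (simplicial R u Sigma /\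
   exists S0 (q0 : 'I_r -> rat), S0 \in Sigma /\ in_relint R u S0 (\sum_(j in C) uR R u j) /\
     (forall j, 0 <= q0 j) /\ (forall j, j \notin S0 -> q0 j = 0) /\
     \sum_(j in C) uR R u j = \sum_(j < r) (ratr (q0 j) : R) *: uR R u j).
  have [k [k0 [lam [lamE [G L]]]]] := @finish R n r u Sigma C S0 q0 PC S0S q00 q0S qE.
  exists lam; split=> //; split=> // _ S q SS relS q0' qS qE'.
  have sub : S \subset S0.
    apply: (@subcone R n r u Sigma S S0 _ fan SS S0S relS).
    exists (fun j => ratr (q0 j)); split; first by move=> j; rewrite ler0q.
    by split=> // j /q0S ->; rewrite rmorph0.
  have qq j : q j = q0 j.
    apply: (fmorph_inj (@ratr R)); apply/eqP; rewrite eq_sym -subr_eq0; apply/eqP.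
    move: j; apply: (simp S0 S0S (fun j => ratr (q0 j) - ratr (q j))).
      move=> j jS0; rewrite q0S // qS ?rmorph0 ?subr0 //.
      by apply: contra jS0; apply: (subsetP sub).
    under eq_bigr do rewrite scalerBl.
    by rewrite sumrB -qE -qE' subrr.
  exists k => // j; rewrite lamE /prim_rel.
  have qz : j \notin S -> q0 j = 0 by move=> jS; rewrite -qq qS.
  case: (boolP (j \in C)) => jC; case: (boolP (j \in S)) => jS; rewrite ?qq; try rewrite (qz jS); rewrite ?mulrBr ?mulr1 ?mulr0 ?opprB ?subr0 ?sub0r ?opprK ?mulrN //.
have [S1 S1S inS1] := cfan (\sum_(j in C) uR R u j).
pose w : 'rV[rat]_n := \sum_(j in C) map_mx (fun z : int => z%:~R) (u j).
have wE : map_mx (@ratr R) w = \sum_(j in C) uR R u j.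
  apply/rowP => k; rewrite !mxE !summxE rmorph_sum; apply: eq_bigr => j _.
  by rewrite !mxE; exact: ratr_int.
rewrite -wE in inS1.
have [q [q0 [qS qE]]] := @rat_cone R n r u S1 w inS1.
rewrite wE in qE.
have [k [k0 [lam [lamE [G L]]]]] := @finish R n r u Sigma C S1 q PC S1S q0 qS qE.
exists lam; split=> //; split=> // simp S' q' S'S relS q0' qS' qE'.
by exfalso; apply: NP; split=> //; exists S', q'.
Qed.
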